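(* Let $A \in (\mathbb{S}_{\max})^{n \times n}$, let $\gamma$ be a $\mathbb{S}_{\max}$-eigenvalue of $A$ and $B=\gamma I\ominus A$, and let $v$ be a $\mathbb{S}_{\max}$-eigenvector associated to the $\mathbb{S}_{\max}$-eigenvalue $\gamma$. \begin{enumerate} \item Assume that there exists an entry of $B^\mathrm{adj}$ which is invertible, that is $B^\mathrm{adj}_{i,j}\in \mathbb{S}_{\max}^{\vee}\setminus\{\mathbf{0}\}$ for some $i,j\in [n]$. Then, there exists $\lambda\in \mathbb{S}_{\max}^\vee\setminus\{\mathbf{0}\}$ such that $v\,\nabla\, \lambda B^\mathrm{adj}_{:,j}$. \item Assume there exists a column $j$ of $B^\mathrm{adj}$ that is non-zero and has only $\mathbb{S}_{\max}^\vee$ entries: $B^\mathrm{adj}_{:,j}\in (\mathbb{S}_{\max}^{\vee})^{n} \setminus\{\mathbf{0}\}$. Then $B^\mathrm{adj}_{:,j}$ is a $\mathbb{S}_{\max}$-eigenvector associated to the $\mathbb{S}_{\max}$-eigenvalue $\gamma$, and there exists $\lambda\in \mathbb{S}_{\max}^\vee\setminus\{\mathbf{0}\}$ such that $v= \lambda B^\mathrm{adj}_{:,j}$. \end{enumerate}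
   Context: $\mathbb{S}_{\max}$ is the symmetrized tropical semiring over a divisible totally ordered abelian group, with zero $\mathbf{0}$, unit $\mathbf{1}$, minus $\ominus$; $\mathbb{S}_{\max}^\vee$ is the set of signed elements (positive, negative, or $\mathbf{0}$); the invertible elements are $\mathbb{S}_{\max}^\vee\setminus\{\mathbf{0}\}$. The balance relation is $a\,\nabla\, b$ iff $a\ominus b$ is balanced, applied entrywise. $\det$ is the signed determinant and $(B^{\mathrm{adj}})_{ij}=(\ominus\mathbf{1})^{i+j}\det B[\hat j,\hat i]$; $B^{\mathrm{adj}}_{:,j}$ is its $j$-th column. An $\mathbb{S}_{\max}$-eigenvalue of $A$ is $\gamma\in\mathbb{S}_{\max}^\vee$ with $\det(\gamma I\ominus A)\,\nabla\,\mathbf{0}$; an associated $\mathbb{S}_{\max}$-eigenvector is $v\in(\mathbb{S}_{\max}^\vee)^n\setminus\{\mathbf{0}\}$ with $Av\,\nabla\,\gamma v$. *)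

(* Defs.v *)
From HB Require Import structures.
From mathcomp Require Import all_boot all_order all_algebra all_fingroup.
Set Implicit Arguments. Unset Strict Implicit. Unset Printing Implicit Defensive.
Import GRing.Theory.
Local Open Scope ring_scope.

Record DOAG := {
  dg_car : zmodType;
  dg_le : rel dg_car;
  dg_le_refl : forall a, dg_le a a;
  dg_le_anti : forall a b, dg_le a b -> dg_le b a -> a = b;
  dg_le_trans : forall a b c, dg_le a b -> dg_le b c -> dg_le a c;
  dg_le_total : forall a b, dg_le a b || dg_le b a;
  dg_le_add : forall a b c, dg_le a b -> dg_le (a + c) (b + c);
  dg_div : forall (n : nat) (a : dg_car), (0 < n)%N -> exists b, b *+ n = a
}.

Section Smax.
Variable G : DOAG.
Local Notation T := (dg_car G).
Local Notation dle := (@dg_le G).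

(* The symmetrized tropical semiring S_max over G: the zero (= -oo),
   positive elements  a, negative elements  (-) a, balanced elements a^o. *)
Inductive Smax := SZero | SPos of T | SNeg of T | SBal of T.

Definition smod (x : Smax) : T :=
  match x with SZero => 0 | SPos a | SNeg a | SBal a => a end.

Definition same_sign (x y : Smax) : bool :=
  match x, y with
  | SPos _, SPos _ | SNeg _, SNeg _ | SBal _, SBal _ => true
  | _, _ => false end.

Definition splus (x y : Smax) : Smax :=
  match x, y with
  | SZero, _ => y
  | _, SZero => x
  | _, _ =>
    let a := smod x in let b := smod y in
    if dle a b && ~~ dle b a then y
    else if dle b a && ~~ dle a b then x
    else if same_sign x y then x else SBal a
  end.

Definition stimes (x y : Smax) : Smax :=
  match x, y with
  | SZero, _ | _, SZero => SZero
  | SBal a, _ => SBal (a + smod y)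
  | _, SBal b => SBal (smod x + b)
  | SPos a, SPos b | SNeg a, SNeg b => SPos (a + b)
  | SPos a, SNeg b | SNeg a, SPos b => SNeg (a + b)
  end.

Definition sminus (x : Smax) : Smax :=
  match x with SPos a => SNeg a | SNeg a => SPos a | _ => x end.

Definition sone : Smax := SPos 0.

Definition sbalanced (x : Smax) : bool :=
  match x with SZero | SBal _ => true | _ => false end.
Definition ssigned (x : Smax) : bool :=
  match x with SBal _ => false | _ => true end.
Definition sinvertible (x : Smax) : bool :=
  match x with SPos _ | SNeg _ => true | _ => false end.

Definition sbal (x y : Smax) : bool := sbalanced (splus x (sminus y)).

Definition ssign_pow (k : nat) : Smax := if odd k then sminus sone else sone.

Definition sdet (n : nat) (M : 'M[Smax]_n) : Smax :=
  \big[splus/SZero]_(s : 'S_n)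
     stimes (if odd_perm s then sminus sone else sone)
            (\big[stimes/sone]_(i < n) M i (s i)).

Definition sadj (n : nat) (B : 'M[Smax]_n) : 'M[Smax]_n :=
  \matrix_(i < n, j < n)
    stimes (ssign_pow (i + j))
           (sdet (\matrix_(k < n.-1, l < n.-1) B (lift j k) (lift i l))).

Definition sid_scale (n : nat) (g : Smax) : 'M[Smax]_n :=
  \matrix_(i < n, j < n) if i == j then g else SZero.

Definition smsub (n : nat) (M N : 'M[Smax]_n) : 'M[Smax]_n :=
  \matrix_(i < n, j < n) splus (M i j) (sminus (N i j)).

Definition smulv (n : nat) (M : 'M[Smax]_n) (v : 'I_n -> Smax) : 'I_n -> Smax :=
  fun i => \big[splus/SZero]_(j < n) stimes (M i j) (v j).

Definition sscalev (n : nat) (g : Smax) (v : 'I_n -> Smax) : 'I_n -> Smax :=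
  fun i => stimes g (v i).

Definition sbalv (n : nat) (u w : 'I_n -> Smax) : Prop :=
  forall i, sbal (u i) (w i).

Definition is_seigenvalue (n : nat) (A : 'M[Smax]_n) (g : Smax) : Prop :=
  ssigned g /\ sbal (sdet (smsub (sid_scale n g) A)) SZero.

Definition is_seigenvector (n : nat) (A : 'M[Smax]_n) (g : Smax)
    (v : 'I_n -> Smax) : Prop :=
  (forall i, ssigned (v i)) /\ (exists i, v i <> SZero) /\
  sbalv (smulv A v) (sscalev g v).

End Smax.

Arguments SZero {G}.

(* Main.v *)
From HB Require Import structures.
Require Import Defs.
From mathcomp Require Import all_boot all_order all_algebra all_fingroup.
Set Implicit Arguments. Unset Strict Implicit. Unset Printing Implicit Defensive.
Import GRing.Theory.

Section Alg.
Variable G : DOAG.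
Local Notation T := (dg_car G).
Local Notation dle := (@dg_le G).
Local Notation S := (Smax G).
Local Open Scope ring_scope.

Lemma dle_refl (a : T) : dle a a. Proof. exact: dg_le_refl. Qed.
Lemma dle_trans (a b c : T) : dle a b -> dle b c -> dle a c.
Proof. exact: dg_le_trans. Qed.
Lemma dle_anti (a b : T) : dle a b -> dle b a -> a = b.
Proof. exact: dg_le_anti. Qed.
Lemma dle_total (a b : T) : dle a b || dle b a.
Proof. exact: dg_le_total. Qed.
Lemma dle_addr (a b c : T) : dle a b -> dle (a + c) (b + c).
Proof. exact: dg_le_add. Qed.
Lemma dle_addl (a b c : T) : dle a b -> dle (c + a) (c + b).
Proof. by rewrite ![c + _]addrC; apply: dle_addr. Qed.
Lemma dle_add2r (a b c : T) : dle (a + c) (b + c) = dle a b.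
Proof.
apply/idP/idP; last exact: dle_addr.
by move/(dle_addr (- c)); rewrite !addrK.
Qed.
Lemma dle_add2l (a b c : T) : dle (c + a) (c + b) = dle a b.
Proof. by rewrite ![c + _]addrC dle_add2r. Qed.
Lemma dle_add (a b c d : T) : dle a b -> dle c d -> dle (a + c) (b + d).
Proof. move=> h1 h2; apply: dle_trans (dle_addr c h1) (dle_addl b h2). Qed.
Lemma dle_nle (a b : T) : ~~ dle a b -> dle b a.
Proof. by case/orP: (dle_total a b) => ->. Qed.

Variant cmp_spec (a b : T) : bool -> bool -> Prop :=
| CmpLt of dle a b & ~~ dle b a : cmp_spec a b true false
| CmpGt of dle b a & ~~ dle a b : cmp_spec a b false true
| CmpEq of a = b : cmp_spec a b true true.

Lemma cmpP a b : cmp_spec a b (dle a b) (dle b a).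
Proof.
case h1: (dle a b); case h2: (dle b a).
- by constructor; apply: dle_anti.
- by constructor; rewrite ?h1 ?h2.
- by constructor; rewrite ?h1 ?h2.
- by move: (dle_total a b); rewrite h1 h2.
Qed.

Lemma dlt_add (a b c d : T) : ~~ dle b a -> dle c d -> ~~ dle (b + d) (a + c).
Proof.
move=> h1 h2; apply/negP => h3; move/negP: h1; apply.
have h4 : dle (b + c) (a + c) by apply: dle_trans h3; apply: dle_addl.
by rewrite dle_add2r in h4.
Qed.

End Alg.

Section Alg2.
Variable G : DOAG.
Local Notation T := (dg_car G).
Local Notation dle := (@dg_le G).
Local Notation S := (Smax G).
Local Open Scope ring_scope.

Ltac tcl := repeat match goal with
 | H1 : is_true (dg_le ?x ?y), H2 : is_true (dg_le ?y ?z) |- _ =>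
    lazymatch goal with
    | _ : is_true (dg_le x z) |- _ => fail
    | _ => have := dle_trans H1 H2; move=> ?
    end
 end.
Ltac contra := match goal with
 | H : is_true (~~ dg_le ?x ?y), H' : is_true (dg_le ?x ?y) |- _ => by rewrite H' in H
 | H : is_true (~~ dg_le ?x ?x) |- _ => by rewrite dle_refl in H
 end.
Ltac ord := repeat (match goal with
  | |- context [dg_le ?a ?b] => case: (cmpP a b) => [? ?|? ?|?]; try subst
  end; rewrite /= ?andbT ?andbF ?eqxx //=); tcl; try contra.

Lemma splusC (x y : S) : splus x y = splus y x.
Proof. by case: x; case: y => //= *; ord. Qed.

Lemma splus0x (x : S) : splus SZero x = x. Proof. by []. Qed.
Lemma splusx0 (x : S) : splus x SZero = x. Proof. by case: x. Qed.

Lemma splusA (x y z : S) : splus x (splus y z) = splus (splus x y) z.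
Proof.
case: x => [|a|a|a]; case: y => [|b|b|b]; case: z => [|c|c|c] //=;
 rewrite /splus /=; ord.
Qed.

Lemma stimesC (x y : S) : stimes x y = stimes y x.
Proof. by case: x => [|a|a|a]; case: y => [|b|b|b] //=; rewrite addrC. Qed.
Lemma stimes0x (x : S) : stimes SZero x = SZero. Proof. by []. Qed.
Lemma stimesx0 (x : S) : stimes x SZero = SZero. Proof. by case: x. Qed.
Lemma stimes1x (x : S) : stimes (sone G) x = x.
Proof. by case: x => //= a; rewrite add0r. Qed.
Lemma stimesx1 (x : S) : stimes x (sone G) = x.
Proof. by rewrite stimesC stimes1x. Qed.
Lemma stimesA (x y z : S) : stimes x (stimes y z) = stimes (stimes x y) z.
Proof.
by case: x => [|a|a|a]; case: y => [|b|b|b]; case: z => [|c|c|c] //=; rewrite addrA.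
Qed.

Lemma stimes_plusr (x y z : S) : stimes x (splus y z) = splus (stimes x y) (stimes x z).
Proof.
case: x => [|a|a|a]; case: y => [|b|b|b]; case: z => [|c|c|c] //=;
 rewrite /splus /= ?dle_add2l; ord.
Qed.
Lemma stimes_plusl (x y z : S) : stimes (splus y z) x = splus (stimes y x) (stimes z x).
Proof. by rewrite stimesC stimes_plusr ![stimes x _]stimesC. Qed.

Lemma sminusK (x : S) : sminus (sminus x) = x. Proof. by case: x. Qed.
Lemma sminus_plus (x y : S) : sminus (splus x y) = splus (sminus x) (sminus y).
Proof.
case: x => [|a|a|a]; case: y => [|b|b|b] //=; rewrite /splus /=; ord.
Qed.
Lemma sminus_timesl (x y : S) : sminus (stimes x y) = stimes (sminus x) y.
Proof. by case: x => [|a|a|a]; case: y => [|b|b|b]. Qed.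
Lemma sminus_timesr (x y : S) : sminus (stimes x y) = stimes x (sminus y).
Proof. by case: x => [|a|a|a]; case: y => [|b|b|b]. Qed.
Lemma sminusE (x : S) : sminus x = stimes (sminus (sone G)) x.
Proof. by case: x => //= a; rewrite add0r. Qed.

End Alg2.

HB.instance Definition _ (G : DOAG) :=
  Monoid.isComLaw.Build (Smax G) SZero (@splus G) (@splusA G) (@splusC G) (@splus0x G).
HB.instance Definition _ (G : DOAG) :=
  Monoid.isComLaw.Build (Smax G) (sone G) (@stimes G) (@stimesA G) (@stimesC G) (@stimes1x G).
HB.instance Definition _ (G : DOAG) :=
  Monoid.isMulLaw.Build (Smax G) SZero (@stimes G) (@stimes0x G) (@stimesx0 G).
HB.instance Definition _ (G : DOAG) :=
  Monoid.isAddLaw.Build (Smax G) (@stimes G) (@splus G)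
    (fun x y z => @stimes_plusl G z x y) (@stimes_plusr G).

Section T.
Variable G : DOAG.
Lemma test n (F : 'I_n -> Smax G) (c : Smax G) :
  stimes c (\big[@splus G/SZero]_(i < n) F i) = \big[@splus G/SZero]_(i < n) stimes c (F i).
Proof. by rewrite big_distrr. Qed.
End T.

Section Mod.
Variable G : DOAG.
Local Notation T := (dg_car G).
Local Notation dle := (@dg_le G).
Local Notation S := (Smax G).
Local Notation one := (sone G).
Local Open Scope ring_scope.
Implicit Types x y z a b c : S.

Ltac tcl := repeat match goal with
 | H1 : is_true (dg_le ?x ?y), H2 : is_true (dg_le ?y ?z) |- _ =>
    lazymatch goal with
    | _ : is_true (dg_le x z) |- _ => fail
    | _ => have := dle_trans H1 H2; move=> ?
    end
 end.
Ltac contra := match goal with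
 | H : is_true (~~ dg_le ?x ?y), H' : is_true (dg_le ?x ?y) |- _ => by rewrite H' in H
 | H : is_true (~~ dg_le ?x ?x) |- _ => by rewrite dle_refl in H
 end.
Ltac ord := repeat (match goal with
  | |- context [dg_le ?a ?b] => case: (cmpP a b) => [? ?|? ?|?]; try subst
  end; rewrite /= ?andbT ?andbF ?eqxx //=); tcl; try contra.

Definition isz (x : S) : bool := if x is SZero then true else false.
Definition mle (x y : S) : bool := isz x || (~~ isz y && dle (smod x) (smod y)).

Lemma mle_refl x : mle x x.
Proof. by case: x => //= a; apply: dle_refl. Qed.
Lemma mle_trans x y z : mle x y -> mle y z -> mle x z.
Proof.
case: x => [|a|a|a]; case: y => [|b|b|b]; case: z => [|c|c|c] //=; exact: dle_trans.
Qed.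
Lemma mle_total x y : mle x y || mle y x.
Proof. by case: x => [|a|a|a]; case: y => [|b|b|b] //=; apply: dle_total. Qed.
Lemma mle0 y : mle SZero y. Proof. by []. Qed.
Lemma mle_nle x y : ~~ mle x y -> mle y x.
Proof. by case/orP: (mle_total x y) => ->. Qed.

Lemma isz_times x y : isz (stimes x y) = isz x || isz y.
Proof. by case: x => [|a|a|a]; case: y => [|b|b|b]. Qed.
Lemma smod_times x y : ~~ isz x -> ~~ isz y -> smod (stimes x y) = smod x + smod y.
Proof. by case: x => [|a|a|a]; case: y => [|b|b|b]. Qed.

Lemma mle_mul x y (x' y' : S) : mle x y -> mle x' y' -> mle (stimes x x') (stimes y y').
Proof.
rewrite /mle !isz_times.
case zx: (isz x) => //=; case zx': (isz x') => /=; rewrite ?orbT //.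
case zy: (isz y) => //=; case zy': (isz y') => //= h1 h2.
by rewrite !smod_times ?zx ?zx' ?zy ?zy' //; apply: dle_add.
Qed.

Lemma mle_cancel c x y : ~~ isz c -> mle (stimes x c) (stimes y c) -> mle x y.
Proof.
move=> zc; rewrite /mle !isz_times (negbTE zc) !orbF.
case zx: (isz x) => //=; case zy: (isz y) => //=.
by rewrite !smod_times ?zx ?zy // dle_add2r.
Qed.

Lemma isz_minus x : isz (sminus x) = isz x. Proof. by case: x. Qed.
Lemma smod_minus x : smod (sminus x) = smod x. Proof. by case: x. Qed.
Lemma mle_minusl x y : mle (sminus x) y = mle x y.
Proof. by rewrite /mle isz_minus smod_minus. Qed.
Lemma mle_minusr x y : mle x (sminus y) = mle x y.
Proof. by rewrite /mle isz_minus smod_minus. Qed.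

Lemma mle_plus x y z : mle x z -> mle y z -> mle (splus x y) z.
Proof.
case: x => [|a|a|a]; case: y => [|b|b|b]; case: z => [|c|c|c] //=;
  rewrite /splus /=; ord.
Qed.
Lemma mle_plusl x y : mle x (splus x y).
Proof.
case: x => [|a|a|a]; case: y => [|b|b|b] //=; rewrite /splus /=; ord;
 rewrite /mle /= ?dle_refl //.
Qed.
Lemma mle_plusr x y : mle y (splus x y).
Proof. by rewrite splusC mle_plusl. Qed.

Lemma bal_absorb b y : sbalanced b -> mle y b -> sbalanced (splus b y).
Proof.
case: b => [|a|a|a]; case: y => [|c|c|c] //=; rewrite /splus /mle /=; ord.
Qed.

Lemma signed_absorb a b : sinvertible a -> mle b a -> ~~ sbalanced (splus a b) ->
  splus a b = a.
Proof.
case: a => [|a|a|a]; case: b => [|c|c|c] //=; rewrite /splus /mle /=; ord.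
Qed.

Lemma bal_opp a b : sinvertible a -> mle b a -> sbalanced (splus a b) ->
  b = sminus a \/ (sbalanced b /\ mle a b).
Proof.
case: a => [|a|a|a]; case: b => [|c|c|c] //=; rewrite /splus /mle /=; ord;
 rewrite ?dle_refl; auto.
Qed.

Lemma bal_timesl x y : sbalanced x -> sbalanced (stimes x y).
Proof. by case: x => [|a|a|a]; case: y => [|b|b|b]. Qed.
Lemma bal_timesr x y : sbalanced y -> sbalanced (stimes x y).
Proof. by case: x => [|a|a|a]; case: y => [|b|b|b]. Qed.
Lemma bal_plus x y : sbalanced x -> sbalanced y -> sbalanced (splus x y).
Proof.
case: x => [|a|a|a]; case: y => [|b|b|b] //=; rewrite /splus /=; ord.
Qed.
Lemma bal_minus x : sbalanced (sminus x) = sbalanced x. Proof. by case: x. Qed.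
Lemma bal_xmx x : sbalanced (splus x (sminus x)).
Proof. by case: x => [|a|a|a] //=; rewrite /splus /= dle_refl. Qed.

Lemma bal_cancel c x : sinvertible c -> sbalanced (stimes x c) -> sbalanced x.
Proof. by case: c => [|a|a|a]; case: x => [|b|b|b]. Qed.

Definition sinv (x : S) : S :=
  match x with SPos a => SPos (- a) | SNeg a => SNeg (- a) | _ => x end.
Lemma sinvK c : sinvertible c -> stimes (sinv c) c = one.
Proof. by case: c => //= a _; rewrite addNr. Qed.
Lemma sinv_inv c : sinvertible c -> sinvertible (sinv c).
Proof. by case: c. Qed.

Lemma inv_times x y : sinvertible (stimes x y) = sinvertible x && sinvertible y.
Proof. by case: x => [|a|a|a]; case: y => [|b|b|b]. Qed.
Lemma signed_times x y : ssigned x -> ssigned y -> ssigned (stimes x y).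
Proof. by case: x => [|a|a|a]; case: y => [|b|b|b]. Qed.
Lemma signed_minus x : ssigned (sminus x) = ssigned x. Proof. by case: x. Qed.
Lemma inv_minus x : sinvertible (sminus x) = sinvertible x. Proof. by case: x. Qed.

Lemma signed_bal_eq x y : ssigned x -> ssigned y -> sbal x y -> x = y.
Proof.
rewrite /sbal; case: x => [|a|a|a]; case: y => [|b|b|b] //=; rewrite /splus /=; ord.
Qed.
Lemma signed_inv x : ssigned x -> ~~ isz x -> sinvertible x.
Proof. by case: x. Qed.
Lemma inv_nz x : sinvertible x -> ~~ isz x.
Proof. by case: x. Qed.
Lemma inv_signed x : sinvertible x -> ssigned x.
Proof. by case: x. Qed.
Lemma self_minus_bal x : x = sminus x -> sbalanced x.
Proof. by case: x => // a; case. Qed.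
Lemma bal_signed0 x : ssigned x -> sbalanced x -> x = SZero.
Proof. by case: x. Qed.
Lemma isz_eq x : isz x -> x = SZero. Proof. by case: x. Qed.

Lemma sbal_sym x y : sbal x y = sbal y x.
Proof.
rewrite /sbal -bal_minus sminus_plus sminusK splusC //.
Qed.

Lemma sbal_mul c x y : sbal x y -> sbal (stimes c x) (stimes c y).
Proof.
rewrite /sbal => h; rewrite sminus_timesr -stimes_plusr; exact: bal_timesr.
Qed.

End Mod.

Section Big.
Variable G : DOAG.
Local Notation S := (Smax G).
Local Notation one := (sone G).
Implicit Types x y z a c : S.

Definition sgnS (b : bool) : S := if b then sminus one else one.

Lemma sgnS_mul (b1 b2 : bool) x : stimes (sgnS b1) (stimes (sgnS b2) x) = stimes (sgnS (b1 (+) b2)) x.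
Proof.
by case: b1; case: b2; case: x => [|a|a|a] //=; rewrite ?GRing.add0r.
Qed.
Lemma sgnS_true x : stimes (sgnS true) x = sminus x.
Proof. by case: x => [|a|a|a] //=; rewrite ?GRing.add0r. Qed.
Lemma sgnS_false x : stimes (sgnS false) x = x.
Proof. by rewrite /sgnS stimes1x. Qed.
Lemma mle_sgnl b x y : mle (stimes (sgnS b) x) y = mle x y.
Proof. by case: b; rewrite ?sgnS_true ?sgnS_false ?mle_minusl. Qed.
Lemma mle_sgnr b x y : mle x (stimes (sgnS b) y) = mle x y.
Proof. by case: b; rewrite ?sgnS_true ?sgnS_false ?mle_minusr. Qed.
Lemma bal_sgn b x : sbalanced (stimes (sgnS b) x) = sbalanced x.
Proof. by case: b; rewrite ?sgnS_true ?sgnS_false ?bal_minus. Qed.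

Lemma exists_max (I : finType) (i0 : I) (f : I -> S) :
  exists i, forall k, mle (f k) (f i).
Proof.
suff [i hi] : exists i, forall k, k \in enum I -> mle (f k) (f i).
  by exists i => k; apply: hi; rewrite mem_enum.
elim: (enum I) => [|a s [i hi]]; first by exists i0.
case h: (mle (f a) (f i)).
  by exists i => k; rewrite inE => /orP [/eqP -> //|]; apply: hi.
exists a => k; rewrite inE => /orP [/eqP -> //|]; first exact: mle_refl.
move=> ks; apply: mle_trans (hi k ks) _; apply: mle_nle; by rewrite h.
Qed.

Lemma mle_sum (I : finType) (P : pred I) (f : I -> S) z :
  (forall k, P k -> mle (f k) z) -> mle (\big[@splus G/SZero]_(k | P k) f k) z.
Proof.
move=> h; apply: (big_ind (fun w => mle w z)) => //; first by move=> *; apply: mle_plus.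
Qed.

Lemma sum_absorb (I : finType) (P : pred I) (f : I -> S) a :
  (forall k, P k -> splus a (f k) = a) -> splus a (\big[@splus G/SZero]_(k | P k) f k) = a.
Proof.
move=> h; apply: (big_ind (fun w => splus a w = a)) => //; first exact: splusx0.
by move=> u w h1 h2; rewrite splusA h1 h2.
Qed.

Lemma minus_sum (I : finType) (P : pred I) (f : I -> S) :
  sminus (\big[@splus G/SZero]_(k | P k) f k) = \big[@splus G/SZero]_(k | P k) sminus (f k).
Proof. exact: (big_morph _ (@sminus_plus G) (erefl : sminus (@SZero G) = SZero)). Qed.

Lemma bal_sum (I : finType) (P : pred I) (f : I -> S) :
  (forall k, P k -> sbalanced (f k)) -> sbalanced (\big[@splus G/SZero]_(k | P k) f k).
Proof. by move=> h; apply: (big_ind (@sbalanced G)) => //; move=> *; apply: bal_plus. Qed.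

Lemma sum_bal (I : finType) (f : I -> S) i :
  (forall k, mle (f k) (f i)) ->
  (sbalanced (f i) \/ exists j, j != i /\ sbalanced (splus (f i) (f j))) ->
  sbalanced (\big[@splus G/SZero]_k f k).
Proof.
move=> hm [hb|[j [hji hb]]].
  rewrite (bigD1 i) //=; apply: bal_absorb => //; apply: mle_sum => k _; exact: hm.
rewrite (bigD1 i) //= (bigD1 j) /=; last by rewrite hji.
rewrite splusA; apply: bal_absorb => //; apply: mle_sum => k _.
apply: mle_trans (hm k) _; exact: mle_plusl.
Qed.

Lemma mle_prod (I : finType) (P : pred I) (f g : I -> S) :
  (forall k, P k -> mle (f k) (g k)) ->
  mle (\big[@stimes G/one]_(k | P k) f k) (\big[@stimes G/one]_(k | P k) g k).
Proof.
move=> h; apply: (big_ind2 (fun u w => mle u w)) => //; first exact: mle_refl.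
by move=> *; apply: mle_mul.
Qed.

Lemma inv_prod (I : finType) (P : pred I) (f : I -> S) :
  (forall k, P k -> sinvertible (f k)) -> sinvertible (\big[@stimes G/one]_(k | P k) f k).
Proof. by move=> h; apply: (big_ind (@sinvertible G)) => // x y hx hy; rewrite inv_times hx hy. Qed.

Lemma prod_inv_each (I : finType) (P : pred I) (f : I -> S) k :
  sinvertible (\big[@stimes G/one]_(k | P k) f k) -> P k -> sinvertible (f k).
Proof. by move=> h pk; move: h; rewrite (bigD1 k) //= inv_times => /andP[]. Qed.

Lemma bal_prod (I : finType) (P : pred I) (f : I -> S) k :
  P k -> sbalanced (f k) -> sbalanced (\big[@stimes G/one]_(k | P k) f k).
Proof. by move=> pk hb; rewrite (bigD1 k) //=; apply: bal_timesl. Qed.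

Lemma iter_sgn m : iter m (stimes (sminus one)) one = sgnS (odd m).
Proof.
by elim: m => // m IH; rewrite iterS IH /=; case: (odd m); rewrite /sgnS /= ?GRing.addr0.
Qed.

Lemma prod_minus (I : finType) (P : pred I) (f : I -> S) :
  \big[@stimes G/one]_(k | P k) sminus (f k) =
  stimes (sgnS (odd #|P|)) (\big[@stimes G/one]_(k | P k) f k).
Proof.
under eq_bigr do rewrite sminusE.
by rewrite big_split /= big_const iter_sgn.
Qed.

End Big.

Section Det.
Variable G : DOAG.
Local Notation S := (Smax G).
Local Notation one := (sone G).
Lemma sdetE n (M : 'M[S]_n) :
  sdet M = \big[@splus G/SZero]_(s : 'S_n) stimes (sgnS G (odd_perm s)) (\big[@stimes G/one]_i M i (s i)).
Proof. by []. Qed.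

Lemma ssign_powE k : ssign_pow G k = sgnS G (odd k).
Proof. by []. Qed.

Definition sminor n (M : 'M[S]_n) (j m : 'I_n) : 'M[S]_n.-1 :=
  \matrix_(k < n.-1, l < n.-1) M (lift j k) (lift m l).

Lemma expand_cof n (M : 'M[S]_n.+1) (j m : 'I_n.+1) :
  \big[@splus G/SZero]_(s : 'S_n.+1 | s j == m) stimes (sgnS G (odd_perm s)) (\big[@stimes G/one]_i M i (s i)) =
  stimes (M j m) (stimes (sgnS G (odd (j + m))) (sdet (sminor M j m))).
Proof.
rewrite (reindex (lift_perm j m)); last first.
  pose ulsf i (s : 'S_n.+1) k := odflt k (unlift (s i) (s (lift i k))).
  have ulsfK i (s : 'S__) k: lift (s i) (ulsf i s k) = s (lift i k).
    rewrite /ulsf; have:= neq_lift i k.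
    by rewrite -(can_eq (permK s)) => /unlift_some[] ? ? ->.
  have inj_ulsf: injective (ulsf j _).
    move=> s; apply: can_inj (ulsf (s j) s^-1%g) _ => k'.
    by rewrite {1}/ulsf ulsfK !permK liftK.
  exists (fun s => perm (inj_ulsf s)) => [s _ | s].
    by apply/permP=> k'; rewrite permE /ulsf lift_perm_lift lift_perm_id liftK.
  move/(s _ =P _) => sj; apply/permP=> k.
  case: (unliftP j k) => [k'|] ->; rewrite ?lift_perm_id //.
  by rewrite lift_perm_lift -sj permE ulsfK.
rewrite sdetE big_distrr big_distrr /=.
apply: eq_big => [s | s _]; first by rewrite lift_perm_id eqxx.
rewrite (bigD1 j) //= lift_perm_id.
rewrite stimesA [stimes (sgnS _ _) (M j m)]stimesC -!stimesA sgnS_mul oddD -odd_lift_perm.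
congr (stimes _ (stimes _ _)).
case: (pickP 'I_n) => [k0 _ | n0]; last first.
  rewrite !big1 //; move=> k hk;
  first [by have := n0 k | by move: hk; rewrite eq_sym => /unlift_some[i]; have := n0 i].
rewrite (reindex (lift j)).
  by apply: eq_big => [k | k _] /=; rewrite ?(eq_sym _ j) ?neq_lift // lift_perm_lift !mxE.
exists (fun k => odflt k0 (unlift j k)) => k; first by rewrite liftK.
move=> hk; have hk' : j != k by rewrite eq_sym.
by case/unlift_some: hk' => k' -> ->.
Qed.

Lemma laplace n (M : 'M[S]_n) (j : 'I_n) :
  sdet M = \big[@splus G/SZero]_m stimes (M j m) (stimes (sgnS G (odd (j + m))) (sdet (sminor M j m))).
Proof.
case: n M j => [|n] M j; first by case: j.
rewrite sdetE (partition_big (fun s : 'S_n.+1 => s j) predT) //=.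
by apply: eq_bigr => m _; rewrite expand_cof.
Qed.


Lemma laplace_rowrep n (B : 'M[S]_n) (j : 'I_n) (z : 'I_n -> S) :
  sdet (\matrix_(r, m) if r == j then z m else B r m) =
  \big[@splus G/SZero]_m stimes (z m) (sadj B m j).
Proof.
rewrite (laplace _ j); apply: eq_bigr => m _; rewrite mxE eqxx /sadj mxE ssign_powE addnC.
congr (stimes _ (stimes _ (sdet _))); apply/matrixP => k l.
by rewrite !mxE eq_sym (negbTE (neq_lift _ _)).
Qed.

Lemma det_eq_rows n (M : 'M[S]_n) (r j : 'I_n) : r != j ->
  (forall m, M r m = M j m) -> sbalanced (sdet M).
Proof.
move=> hrj hM; apply: self_minus_bal.
set t := tperm r j.
rewrite sdetE {1}(reindex_inj (mulgI t)) minus_sum /=.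
apply: eq_bigr => s _.
rewrite odd_mul_tperm hrj /= -sgnS_true sgnS_mul /=.
congr (stimes _ _).
rewrite (reindex_inj (@perm_inj _ t)) /=.
apply: eq_bigr => i _; rewrite permM tpermK.
by case: tpermP => [->|->|//]; rewrite ?hM.
Qed.

End Det.

Section Cyc.
Variable T : finType.

Fixpoint cycs (l : seq T) : {perm T} :=
  match l with
  | a :: ((b :: _) as l') => (cycs l' * tperm a b)%g
  | _ => 1%g
  end.

Lemma cycs_next (l : seq T) : uniq l -> forall x, cycs l x = next l x.
Proof.
elim: l => [|a l IH] hu x; first by rewrite /= perm1.
case: l IH hu => [|b l] IH hu.
  by rewrite /= perm1; case: eqP => // ->.
move: (hu); rewrite /= => /andP [ha hbl].
change ((cycs (b :: l) * tperm a b)%g x = next (a :: b :: l) x).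
rewrite permM (IH hbl) !next_nth.
have hab : a != b by move: ha; rewrite inE negb_or => /andP[].
have hal : a \notin l by move: ha; rewrite inE negb_or => /andP[].
have hbl' : b \notin l by move: hbl => /= /andP[].
have [->|xa] := eqVneq x a.
  by rewrite (negbTE ha) mem_head /= eqxx tpermL.
rewrite [x \in a :: _]in_cons (negbTE xa) orFb.
case xbl: (x \in b :: l); last first.
  rewrite tpermD //; first by rewrite eq_sym.
  by apply: contraFN xbl => /eqP <-; exact: mem_head.
have -> : index x [:: a, b & l] = (index x (b :: l)).+1.
  by rewrite [LHS]/= eq_sym (negbTE xa).
set i := index x (b :: l).
have -> : nth a (b :: l) i.+1 = nth a l i by [].
have : i < (size l).+1 by rewrite /i index_mem xbl.
rewrite ltnS leq_eqVlt => /orP [/eqP ei | lti].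
  by rewrite ei !nth_default // tpermR.
rewrite (set_nth_default a) // tpermD //.
  by apply: contraNneq hal => ->; rewrite mem_nth.
by apply: contraNneq hbl' => ->; rewrite mem_nth.
Qed.

Lemma odd_cycs (l : seq T) : uniq l -> odd_perm (cycs l) = odd (size l).-1.
Proof.
elim: l => [|a l IH] hu; first by rewrite /= odd_perm1.
case: l IH hu => [|b l] IH hu; first by rewrite /= odd_perm1.
move: (hu); rewrite /= => /andP [ha hbl].
have hab : a != b by move: ha; rewrite inE negb_or => /andP[].
by rewrite odd_permM (IH hbl) odd_tperm hab /= addbT.
Qed.

End Cyc.

Section LemD.
Variable G : DOAG.
Local Notation S := (Smax G).
Local Notation one := (sone G).
Implicit Types x y z a c : S.

Lemma bal_not_inv x : sbalanced x = ~~ sinvertible x. Proof. by case: x. Qed.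

Lemma mle_strict a a' (b b' : S) : sinvertible a -> sinvertible a' ->
  ~~ mle b a -> mle a' b' -> ~~ mle (stimes b b') (stimes a a').
Proof.
move=> ha ha' hba hab'.
have nzb : ~~ isz b by apply: contra hba => /isz_eq ->.
have nza' := inv_nz ha'. have nza := inv_nz ha.
have nzb' : ~~ isz b' by move: hab'; rewrite /mle (negbTE nza') /= => /andP[].
move: hba hab'; rewrite /mle !isz_times (negbTE nzb) (negbTE nzb') (negbTE nza) (negbTE nza') /=.
rewrite !smod_times //; exact: dlt_add.
Qed.

Lemma eq_cancel c x y : sinvertible c -> stimes x c = stimes y c -> x = y.
Proof.
move=> hc e; have := congr1 (fun w => stimes w (sinv c)) e.
by rewrite -!stimesA [stimes c _]stimesC sinvK // !stimesx1.
Qed.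

Lemma prod_le_each (I : finType) (C : pred I) (a b : I -> S) :
  (forall i, C i -> sinvertible (a i)) -> (forall i, C i -> mle (a i) (b i)) ->
  mle (\big[@stimes G/one]_(i | C i) b i) (\big[@stimes G/one]_(i | C i) a i) ->
  forall i, C i -> mle (b i) (a i).
Proof.
move=> ha hab hle i hi; apply/negPn/negP => hn.
move: hle; rewrite (bigD1 i hi) [X in mle _ X](bigD1 i hi) /=.
apply/negP; apply: mle_strict => //; first exact: ha.
  by apply: inv_prod => k /andP[hk _]; apply: ha.
by apply: mle_prod => k /andP[hk _]; apply: hab.
Qed.

Lemma split_tm n (M : 'M[S]_n) (x : 'I_n -> S) (r : 'S_n) (C : pred 'I_n) :
  stimes (\big[@stimes G/one]_i M i (r i)) (\big[@stimes G/one]_(i | C i) x (r i)) =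
  stimes (\big[@stimes G/one]_(i | ~~ C i) M i (r i))
         (\big[@stimes G/one]_(i | C i) stimes (M i (r i)) (x (r i))).
Proof.
rewrite (bigID C) /= big_split /=.
move: (\big[@stimes G/one]_(i | C i) M i (r i)) (\big[@stimes G/one]_(i | ~~ C i) M i (r i))
  (\big[@stimes G/one]_(i | C i) x (r i)) => P1 P2 X.
by rewrite (stimesC P1 P2) -stimesA.
Qed.


Lemma lemD n (M : 'M[S]_n) (x : 'I_n -> S) :
  (forall m, ssigned (x m)) -> (exists m, ~~ isz (x m)) ->
  (forall r, sbalanced (\big[@splus G/SZero]_m stimes (M r m) (x m))) ->
  sbalanced (sdet M).
Proof.
move=> xs [m0 hm0] hrow.
pose tm (s : 'S_n) := \big[@stimes G/one]_i M i (s i).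
pose f (s : 'S_n) := stimes (sgnS G (odd_perm s)) (tm s).
have [sg hsg] := exists_max 1%g tm.
have hf : forall k, mle (f k) (f sg) by move=> k; rewrite /f mle_sgnl mle_sgnr.
have -> : sdet M = \big[@splus G/SZero]_s f s by [].
case hinv: (sinvertible (tm sg)); last first.
  by apply: (sum_bal hf); left; rewrite /f bal_sgn bal_not_inv hinv.
have Minv : forall i, sinvertible (M i (sg i)).
  by move=> i; apply: (prod_inv_each (k := i) hinv).
have xinv : forall m, ~~ isz (x m) -> sinvertible (x m).
  by move=> m hm; apply: signed_inv.
pose cond (m m' : 'I_n) := let r := (sg^-1)%g m in
  [&& m' != m, ~~ isz (x m') &
   (~~ mle (stimes (M r m') (x m')) (stimes (M r m) (x m)) ||
    sbalanced (splus (stimes (M r m) (x m)) (stimes (M r m') (x m'))))].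
pose F m := odflt m0 [pick m' | cond m m'].
have FU : forall m, ~~ isz (x (F m)).
  by move=> m; rewrite /F; case: pickP => [m' /and3P[]|] //=.
have Fc : forall m, ~~ isz (x m) -> cond m (F m).
  move=> m hm; rewrite /F; case: pickP => [m' h|hn] //=.
  exfalso; set r := (sg^-1)%g m.
  have ar : sinvertible (stimes (M r m) (x m)).
    by rewrite inv_times xinv // andbT; have := Minv r; rewrite /r permKV.
  have := hrow r; rewrite (bigD1 m) //= sum_absorb ?bal_not_inv ?ar //.
  move=> k hk; case zk: (isz (x k)).
    by rewrite (isz_eq zk) stimesx0 splusx0.
  have := hn k; rewrite /cond hk zk /= => /negbT; rewrite negb_or negbK => /andP[h1 h2].
  exact: signed_absorb.
have iterU : forall k, ~~ isz (x (iter k F m0)) by case => //= k; exact: FU.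
have /trajectP[i lti ei] := looping_order F m0.
set y := iter i F m0.
have hcyc : fcycle F (fingraph.orbit F y).
  apply: (all_iffLR orbitPcycle 3 0); exists (fingraph.order F m0 - i).-1.
  by rewrite prednK ?subn_gt0 // /y -iterD subnK ?(ltnW lti) // -ei.
set l := fingraph.orbit F y.
have ul : uniq l := fingraph.orbit_uniq F y.
have yl : y \in l := fingraph.in_orbit F y.
have Fnext : forall w, w \in l -> F w = next l w.
  by move=> w hz; apply/eqP; apply: (next_cycle hcyc hz).
have lU : forall w, w \in l -> ~~ isz (x w).
  by move=> w; rewrite -fconnect_orbit => /iter_findex <-; rewrite /y -iterD; apply: iterU.
pose pi := cycs l.
have piE : forall w, pi w = next l w := cycs_next ul.
have piout : forall w, w \notin l -> pi w = w by move=> w hz; rewrite piE next_nth (negbTE hz).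
have piin : forall w, (pi w \in l) = (w \in l) by move=> w; rewrite piE mem_next.
pose tau := (sg * pi)%g.
have tauE : forall r, tau r = pi (sg r) by move=> r; rewrite permM.
pose C := [pred r | sg r \in l].
have Ctau : forall r, (tau r \in l) = C r by move=> r; rewrite tauE piin.
have tauC : forall r, C r -> tau r = F (sg r) by move=> r hr; rewrite tauE piE Fnext.
have tauNC : forall r, ~~ C r -> tau r = sg r by move=> r hr; rewrite tauE piout.
pose X1 := \big[@stimes G/one]_(r | C r) x (sg r).
have X12 : X1 = \big[@stimes G/one]_(r | C r) x (tau r).
  transitivity (\big[@stimes G/one]_(m | m \in l) x m).
    by rewrite (reindex_inj (@perm_inj _ sg)).
  by rewrite (reindex_inj (@perm_inj _ tau)); apply: eq_bigl => r; rewrite Ctau.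
have X1inv : sinvertible X1.
  by apply: inv_prod => r hr; apply: xinv; apply: lU.
pose a r := stimes (M r (sg r)) (x (sg r)).
pose b r := stimes (M r (tau r)) (x (tau r)).
pose R := \big[@stimes G/one]_(r | ~~ C r) M r (sg r).
have Rinv : sinvertible R by apply: inv_prod => r _; apply: Minv.
have splits : stimes (tm sg) X1 = stimes R (\big[@stimes G/one]_(r | C r) a r).
  exact: split_tm.
have splitt : stimes (tm tau) X1 = stimes R (\big[@stimes G/one]_(r | C r) b r).
  rewrite X12 split_tm; congr stimes; apply: eq_bigr => r hr; by rewrite tauNC.
have ainv : forall r, C r -> sinvertible (a r).
  by move=> r hr; rewrite inv_times Minv xinv //; apply: lU.
have condr : forall r, C r -> ~~ mle (b r) (a r) || sbalanced (splus (a r) (b r)).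
  move=> r hr; have := Fc (sg r) (lU _ hr); rewrite /cond permK -tauC //.
  by case/and3P.
have hab : forall r, C r -> mle (a r) (b r).
  move=> r hr; case/orP: (condr r hr) => [h|h]; first exact: mle_nle.
  case hba: (mle (b r) (a r)); last by apply: mle_nle; rewrite hba.
  case: (bal_opp (ainv r hr) hba h) => [->|[_ ->]] //.
  by rewrite mle_minusr mle_refl.
have hba : forall r, C r -> mle (b r) (a r).
  apply: prod_le_each => //.
  apply: (@mle_cancel _ R); first exact: inv_nz.
  rewrite ![stimes _ R]stimesC -splits -splitt.
  by apply: mle_mul => //; apply: mle_refl.
have hopp : forall r, C r -> b r = sminus (a r) \/ (sbalanced (b r) /\ mle (a r) (b r)).
  move=> r hr; have := condr r hr; rewrite (hba r hr) /= => h.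
  exact: bal_opp (ainv r hr) (hba r hr) h.
have nX1 : ~~ isz X1 by apply: inv_nz.
case: (boolP [exists r, C r && sbalanced (b r)]).
  case/existsP => r1 /andP [hr1 hb1].
  have tbal : sbalanced (tm tau).
    apply: (bal_cancel X1inv); rewrite splitt; apply: bal_timesr.
    exact: (bal_prod hr1 hb1).
  have hst : mle (tm sg) (tm tau).
    apply: (mle_cancel nX1); rewrite splits splitt.
    by apply: mle_mul; [apply: mle_refl | apply: mle_prod].
  apply: (sum_bal (f := f) (i := tau)); last by left; rewrite /f bal_sgn.
  by move=> k; apply: mle_trans (hf k) _; rewrite /f mle_sgnl mle_sgnr.
move/existsPn => hnb.
have hneg : forall r, C r -> b r = sminus (a r).
  move=> r hr; case: (hopp r hr) => [//|[hb _]].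
  by have := hnb r; rewrite hr hb.
have cC : #|C| = size l.
  rewrite -(card_uniqP ul) -!sum1_card.
  by rewrite [RHS](reindex_inj (@perm_inj _ sg)).
have szl : 0 < size l by case: (l) yl.
have tmt : tm tau = stimes (sgnS G (odd (size l))) (tm sg).
  apply: (eq_cancel X1inv); rewrite splitt (eq_bigr _ hneg) prod_minus cC.
  by rewrite -stimesA splits !stimesA [stimes R _]stimesC.
have ft : f tau = sminus (f sg).
  rewrite /f tmt sgnS_mul odd_permM odd_cycs // -(prednK szl) /= -addbA.
  rewrite addbN addbb /= -sgnS_true sgnS_mul; congr stimes; congr sgnS.
  by rewrite addbC.
apply: (sum_bal hf); right; exists tau; split; last by rewrite ft bal_xmx.
apply/eqP => e.
have hyC : C ((sg^-1)%g y) by rewrite /C inE permKV.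
have := tauC _ hyC; rewrite e permKV => hFy.
by have := Fc y (lU y yl); rewrite /cond -hFy eqxx.
Qed.

End LemD.

Section Main.
Variable G : DOAG.
Local Notation S := (Smax G).
Local Notation one := (sone G).

Lemma Bv_eq n (A : 'M[S]_n) g (w : 'I_n -> S) r :
  smulv (smsub (sid_scale n g) A) w r = splus (stimes g (w r)) (sminus (smulv A w r)).
Proof.
rewrite /smulv /smsub /sid_scale minus_sum.
rewrite (eq_bigr (fun m => splus (stimes (if r == m then g else SZero) (w m))
   (sminus (stimes (A r m) (w m))))); last first.
  by move=> m _; rewrite !mxE stimes_plusl -sminus_timesl.
rewrite big_split /=; congr splus.
rewrite (bigD1 r) //= eqxx big1 ?splusx0 // => m hm.
by rewrite eq_sym (negbTE hm).
Qed.

Lemma eigvec_bal n (A : 'M[S]_n) g (w : 'I_n -> S) :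
  sbalv (smulv A w) (sscalev g w) ->
  forall r, sbalanced (smulv (smsub (sid_scale n g) A) w r).
Proof.
move=> h r; rewrite Bv_eq; have := h r; rewrite /sbal /sscalev => hb.
by rewrite -bal_minus sminus_plus sminusK splusC.
Qed.

Lemma sum2 n (i k : 'I_n) (p q : S) (h : 'I_n -> S) : i != k ->
  \big[@splus G/SZero]_m stimes (if m == i then p else if m == k then q else SZero) (h m)
  = splus (stimes p (h i)) (stimes q (h k)).
Proof.
move=> hik; rewrite (bigD1 i) //= eqxx (bigD1 k) /=; last by rewrite eq_sym.
rewrite eqxx (negbTE (_ : k != i)) ?(eq_sym k) // big1 ?splusx0 //.
by move=> m /andP [h1 h2]; rewrite (negbTE h1) (negbTE h2).
Qed.

Lemma part1 n (A : 'M[S]_n) g (v : 'I_n -> S) :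
  is_seigenvector A g v ->
  forall i j : 'I_n, sinvertible (sadj (smsub (sid_scale n g) A) i j) ->
     exists lam : S, sinvertible lam /\
       sbalv v (fun k => stimes lam (sadj (smsub (sid_scale n g) A) k j)).
Proof.
move=> [vs [[m0 hm0] hev]] i j hc.
set Bm := smsub (sid_scale n g) A.
set c := fun k => sadj Bm k j.
have hrow := eigvec_bal hev.
have key : forall k, sbal (stimes (c i) (v k)) (stimes (v i) (c k)).
  move=> k; have [<-|hik] := eqVneq i k.
    by rewrite /sbal stimesC bal_xmx.
  pose z m := if m == i then v k else if m == k then sminus (v i) else SZero.
  have := @lemD G n (\matrix_(r, m) if r == j then z m else Bm r m) v vs.
  rewrite laplace_rowrep /z sum2 //.
  rewrite /sbal -sminus_timesl stimesC [stimes (v i) _]stimesC => -> //.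
    by exists m0; apply/negP => /isz_eq.
  move=> r; under eq_bigr do rewrite mxE.
  case: eqP => [_|_]; last exact: hrow.
  rewrite sum2 // -sminus_timesl stimesC; exact: bal_xmx.
have ci := hc.
have vi : ~~ isz (v i).
  apply/negP => zi; apply: hm0; have := key m0; rewrite (isz_eq zi) /sbal /= splusx0.
  move=> hb; have := bal_signed0 (signed_times (inv_signed ci) (vs m0)) hb.
  move=> e; have := congr1 (stimes (sinv (c i))) e.
  by rewrite stimesA sinvK // stimes1x stimesx0.
exists (stimes (v i) (sinv (c i))); split.
  by rewrite inv_times signed_inv // sinv_inv.
move=> k; have := sbal_mul (sinv (c i)) (key k).
by rewrite stimesA sinvK // stimes1x !stimesA [stimes (sinv _) (v i)]stimesC.
Qed.

End Main.

Unset Implicit Arguments.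
Theorem theorem3p36 (G : DOAG) (n : nat) (A : 'M[Smax G]_n) (g : Smax G)
    (v : 'I_n -> Smax G) :
  is_seigenvalue A g ->
  is_seigenvector A g v ->
  let B := sadj (smsub (sid_scale n g) A) in
  (forall i j : 'I_n, sinvertible (B i j) ->
     exists lam : Smax G, sinvertible lam /\
       sbalv v (fun k => stimes lam (B k j))) /\
  (forall j : 'I_n, (forall k, ssigned (B k j)) -> (exists k, B k j <> SZero) ->
     is_seigenvector A g (fun k => B k j) /\
     exists lam : Smax G, sinvertible lam /\
       (forall k, v k = stimes lam (B k j))).
Proof.
move=> [gs hdet] hv B; split; first exact: part1.
move=> j cs [k0 hk0].
set Bm := smsub (sid_scale n g) A.
have ck0 : sinvertible (B k0 j).
  by apply: signed_inv => //; apply/negP => /isz_eq.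
split.
  split => //; split; first by exists k0.
  move=> r; rewrite sbal_sym.
  have hb : sbalanced (smulv Bm (fun k => B k j) r).
    rewrite /smulv /B -(laplace_rowrep Bm j (fun m => Bm r m)).
    have [erj|nrj] := eqVneq r j.
      have -> : (\matrix_(r0, m) if r0 == j then Bm r m else Bm r0 m)%R = Bm.
        by apply/matrixP => r0 m; rewrite mxE; case: eqP => // ->; rewrite erj.
      by move: hdet; rewrite /sbal /= splusx0.
    apply: (det_eq_rows nrj) => m; rewrite !mxE eqxx (negbTE nrj) //.
  by move: hb; rewrite Bv_eq.
have [lam [hl hb]] := part1 hv ck0.
have [vs _] := hv.
exists lam; split => // k; apply: signed_bal_eq; first exact: vs.
  by apply: signed_times; [exact: inv_signed | exact: cs].
exact: hb.
Qed.
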